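(* Consider an instance of the ranking with submodular valuations problem: a ground set $[m]=\{1,\dots,m\}$, $n$ normalized monotone submodular functions $f^1,\dots,f^n:2^{[m]}\to\mathbb{R}_+$ (given by value oracles), and a weight vector $w\in\mathbb{R}_+^n$. Let $\epsilon=\min\{f^i_S(j) : i\in[n],\ S\subseteq[m],\ j\in[m],\ f^i_S(j)>0\}$, where $f^i_S(j)=f^i(S\cup\{j\})-f^i(S)$. Then the linear ordering produced by the Adaptive Residual Updates algorithm (described below) has cost at most $O(\ln(1/\epsilon))$ times the cost of an optimal linear ordering.
   Context: A set function $f:2^{[m]}\to\mathbb{R}$ is submodular if $f(S)+f(T)\ge f(S\cup T)+f(S\cap T)$ for all $S,T\subseteq[m]$; normalized means $f(\emptyset)=0$; monotone means $f(S)\le f(T)$ whenever $S\subseteq T$. A linear ordering is a bijection $\pi:[m]\to[m]$, where $\pi(t)$ is the element placed at position $t$. The cover time $c_i$ of $f^i$ under $\pi$ is the minimal index $c$ with $f^i(\{\pi(1),\dots,\pi(c)\})\ge 1$ (it is assumed that $f^i([m])\ge1$ for every $i$, so cover times exist). The cost of $\pi$ is $\sum_{i=1}^n w_i c_i$, and the problem asks for an ordering of minimum cost. Adaptive Residual Updates algorithm: start with $S=\emptyset$. For $t=1,\dots,m$: for every $i\in[n]$ and every $j\in[m]\setminus S$ set $P_{ij}=0$ if $f^i(S)\ge 1$, and otherwise $P_{ij}=\min\{1,\ (f^i(S\cup\{j\})-f^i(S))/(1-f^i(S))\}$; then choose $j\in[m]\setminus S$ maximizing $\sum_{i=1}^n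 w_iP_{ij}$, set $S\leftarrow S\cup\{j\}$ and $\pi(t)=j$. *)

(* Defs.v *)
From HB Require Import structures.
From mathcomp Require Import all_boot all_order all_algebra all_fingroup.
From mathcomp Require Import all_classical all_reals all_analysis.
Set Implicit Arguments. Unset Strict Implicit. Unset Printing Implicit Defensive.
Import Order.TTheory GRing.Theory Num.Theory.
Local Open Scope ring_scope.

Section Ranking.
Variables (R : realType) (m : nat).

Definition sf_normalized (g : {set 'I_m} -> R) := g finset.set0 = 0.
Definition sf_monotone (g : {set 'I_m} -> R) := forall S T : {set 'I_m}, S \subset T -> g S <= g T.
Definition sf_submodular (g : {set 'I_m} -> R) :=
  forall S T : {set 'I_m}, g S + g T >= g (S :|: T) + g (S :&: T).
Definition sf_nonneg (g : {set 'I_m} -> R) := forall S, 0 <= g S.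

Definition marginal (g : {set 'I_m} -> R) (S : {set 'I_m}) (j : 'I_m) :=
  g (S :|: [set j]) - g S.

(* positions are 0-indexed: pi t is the element at position t+1.
   sf_prefix pi c = {pi(1),...,pi(c)} in the paper's 1-indexed notation. *)
Definition sf_prefix (pi : {perm 'I_m}) (c : nat) : {set 'I_m} :=
  [set pi t | t : 'I_m & (t < c)%N].

(* cover time: the minimal c in {0,...,m} with g(sf_prefix c) >= 1
   (found by linear search; equals m.+1 if there is none). *)
Definition cover_time (g : {set 'I_m} -> R) (pi : {perm 'I_m}) : nat :=
  find (fun c => 1 <= g (sf_prefix pi c)) (iota 0 m.+1).

Definition cost (n : nat) (f : 'I_n -> {set 'I_m} -> R) (w : 'I_n -> R)
  (pi : {perm 'I_m}) : R :=
  \sum_(i < n) w i * (cover_time (f i) pi)%:R.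

Definition aru_P (g : {set 'I_m} -> R) (S : {set 'I_m}) (j : 'I_m) : R :=
  if 1 <= g S then 0 else Num.min 1 (marginal g S j / (1 - g S)).

Definition aru_score (n : nat) (f : 'I_n -> {set 'I_m} -> R) (w : 'I_n -> R)
  (S : {set 'I_m}) (j : 'I_m) : R :=
  \sum_(i < n) w i * aru_P (f i) S j.

(* pi is an output of the Adaptive Residual Updates algorithm (under some
   tie-breaking rule): at every step t, the chosen element pi t maximizes
   the score among the elements not yet chosen. *)
Definition aru_output (n : nat) (f : 'I_n -> {set 'I_m} -> R) (w : 'I_n -> R)
  (pi : {perm 'I_m}) : Prop :=
  forall (t : 'I_m) (j : 'I_m), j \notin sf_prefix pi t ->
    aru_score f w (sf_prefix pi t) j <= aru_score f w (sf_prefix pi t) (pi t).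

End Ranking.

(* Main.v *)
Require Import Defs.
From HB Require Import structures.
From mathcomp Require Import all_boot all_order all_algebra all_fingroup.
From mathcomp Require Import all_classical all_reals all_analysis.
From mathcomp Require Import ring lra.
Import Order.TTheory GRing.Theory Num.Theory.
Local Open Scope ring_scope.

Section H.
Variable R : realType.
Implicit Types x y z : R.
Lemma mnl x y : Num.min x y <= x.
Proof. rewrite /Num.min; case: ltP => h; lra. Qed.
Lemma mnr x y : Num.min x y <= y.
Proof. rewrite /Num.min; case: ltP => h; lra. Qed.
Lemma mnE1 x y : x <= y -> Num.min x y = x.
Proof. rewrite /Num.min; case: ltP => h ?; lra. Qed.
Lemma mnE2 x y : y <= x -> Num.min x y = y.
Proof. rewrite /Num.min; case: ltP => h ?; lra. Qed.
Lemma mxl x y : x <= Num.max x y.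
Proof. rewrite /Num.max; case: ltP => h; lra. Qed.
Lemma mxr x y : y <= Num.max x y.
Proof. rewrite /Num.max; case: ltP => h; lra. Qed.
Lemma mxE1 x y : y <= x -> Num.max x y = x.
Proof. rewrite /Num.max; case: ltP => h ?; lra. Qed.
Lemma mxE2 x y : x <= y -> Num.max x y = y.
Proof. rewrite /Num.max; case: ltP => h ?; lra. Qed.
End H.

Definition psi {R : realType} (eps x : R) : R := Num.max 0 (1 + ln (x / eps)).

Lemma psi_ge0 (R : realType) (eps x : R) : 0 <= psi eps x.
Proof. exact: mxl. Qed.

Lemma psi_step (R : realType) (eps r r' : R) : 0 < eps -> 0 < r' -> r' <= r ->
  (r - r' = 0 \/ eps <= r - r') -> Num.min 1 ((r - r') / r) + psi eps r' <= psi eps r.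
Proof.
move=> e0 r'0 rr [H0|er].
  have -> : r' = r by apply/eqP; rewrite eq_sym -subr_eq0 H0.
  by rewrite subrr mul0r mnE2 // add0r.
have r0 : 0 < r by apply: lt_le_trans rr.
have reps : 1 < r / eps.
  by rewrite ltr_pdivlMr // mul1r; lra.
have lnp : 0 < ln (r / eps) by apply: ln_gt0.
have -> : psi eps r = 1 + ln (r / eps).
  by rewrite /psi mxE2 //; lra.
have m1 := @mnl _ 1 ((r - r') / r).
have m2 := @mnr _ 1 ((r - r') / r).
rewrite /psi; case: (leP 0 (1 + ln (r' / eps))) => H.

  have : ln (r' / eps) - ln (r / eps) <= - ((r - r') / r).
    rewrite -ln_div ?posrE ?divr_gt0 //.
    have -> : r' / eps / (r / eps) = 1 + (- ((r - r') / r)).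
      by field; rewrite ?gt_eqF.
    apply: le_ln1Dx.
    rewrite ltrN2 ltr_pdivrMr // mul1r; lra.
  lra.

lra.
Qed.

Lemma seq_bound (R : realType) (a P : nat -> R) (eps : R) (c : nat) :
  0 < eps ->
  (forall t, (t < c)%N -> a t < 1) ->
  (forall t, (t.+1 < c)%N -> a t <= a t.+1 /\ (a t.+1 - a t = 0 \/ eps <= a t.+1 - a t)) ->
  (forall t, (t < c)%N -> P t = Num.min 1 ((a t.+1 - a t) / (1 - a t))) ->
  forall d s, (s + d.+1)%N = c -> \sum_(t < d.+1) P (s + t)%N <= 1 + psi eps (1 - a s).
Proof.
move=> e0 Ha Hinc HP; elim=> [|d IH] s Hs.
  rewrite big_ord1 addn0 HP; last by rewrite -Hs addn1.
  have := @mnl _ 1 ((a s.+1 - a s) / (1 - a s)).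
  have := psi_ge0 _ eps (1 - a s); lra.
rewrite big_ord_recl /= addn0.
have Hs1 : (s.+1 + d.+1)%N = c by rewrite -Hs addSnnS.
have IH' := IH s.+1 Hs1.
have -> : \sum_(i < d.+1) P (s + bump 0 i)%N = \sum_(i < d.+1) P (s.+1 + i)%N.
  by apply: eq_bigr => i _; rewrite /bump /= add1n addSnnS.
have lt1 : (s.+1 < c)%N by rewrite -Hs1 addnS ltnS leq_addr.
have lt0 : (s < c)%N by apply: ltnW.
have [inc stp] := Hinc s lt1.
have := @psi_step _ eps (1 - a s) (1 - a s.+1) e0.
have -> : 1 - a s - (1 - a s.+1) = a s.+1 - a s by ring.
rewrite HP //.
have := Ha _ lt1.
move=> h1 h2.
have : Num.min 1 ((a s.+1 - a s) / (1 - a s)) + psi eps (1 - a s.+1) <= psi eps (1 - a s).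
  apply: h2; [lra|lra|].
  by case: stp; [left|right].
lra.
Qed.

Lemma find_iota_spec (P : pred nat) (m : nat) : P m ->
  let k := find P (iota 0 m.+1) in
  [/\ (k <= m)%N, P k & forall k', (k' < k)%N -> ~~ P k'].
Proof.
move=> Pm k.
have hs : has P (iota 0 m.+1).
  by apply/seq.hasP; exists m; rewrite // mem_iota add0n leq0n ltnSn.
have hk : (k < m.+1)%N by have := hs; rewrite has_find size_iota.
split => //.
  have := nth_find 0 hs; rewrite -/k nth_iota //.
move=> k' hk'; have := before_find 0 hk'.
rewrite nth_iota ?add0n; last by apply: ltn_trans hk.
by move=> ->.
Qed.

Section Prefix.
Variable (m : nat) (p : {perm 'I_m}).

Lemma mem_prefix (t : 'I_m) c : (p t \in sf_prefix p c) = (t < c)%N.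
Proof.
rewrite /sf_prefix; apply/imsetP/idP => [[u]|h]; last by exists t; rewrite ?inE.
by rewrite inE => hu /perm_inj ->.
Qed.

Lemma prefix_sub c c' : (c <= c')%N -> sf_prefix p c \subset sf_prefix p c'.
Proof.
move=> h; apply/fintype.subsetP => j /imsetP [u]; rewrite inE => hu ->.
by rewrite mem_prefix; apply: leq_trans h.
Qed.

Lemma prefix_m : sf_prefix p m = [set: 'I_m].
Proof.
apply/setP => j; rewrite inE -(permKV p j) mem_prefix; exact: ltn_ord.
Qed.

Lemma prefix_0 : sf_prefix p 0 = finset.set0.
Proof.
apply/setP => j; rewrite inE -(permKV p j) mem_prefix //.
Qed.

Lemma prefix_S (t : 'I_m) : sf_prefix p t.+1 = sf_prefix p t :|: [set p t].
Proof.
apply/setP => j; rewrite !inE -(permKV p j) !mem_prefix (inj_eq perm_inj).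
by rewrite ltnS leq_eqVlt orbC.
Qed.
End Prefix.
Arguments mnl {R}. Arguments mnr {R}. Arguments mnE1 {R}. Arguments mnE2 {R}. Arguments mxl {R}. Arguments mxr {R}. Arguments mxE1 {R}. Arguments mxE2 {R}.

Lemma min_add (R : realType) (a b : R) : 0 <= a -> 0 <= b ->
  Num.min 1 (a + b) <= Num.min 1 a + Num.min 1 b.
Proof.
move=> a0 b0.
have h1 := @mnl _ 1 (a + b); have h2 := @mnr _ 1 (a + b).
case: (leP a 1) => ha; case: (leP b 1) => hb; lra.
Qed.

Lemma sum_min (R : realType) (I : finType) (A : pred I) (x : I -> R) :
  (forall i, 0 <= x i) ->
  Num.min 1 (\sum_(i in A) x i) <= \sum_(i in A) Num.min 1 (x i).
Proof.
move=> x0.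
suff [] : 0 <= \sum_(i in A) x i /\ Num.min 1 (\sum_(i in A) x i) <= \sum_(i in A) Num.min 1 (x i) by [].
apply: (big_ind2 (fun a b => 0 <= a /\ Num.min 1 a <= b)).
- by split; [exact: lexx | exact: mnr].
- move=> a1 b1 a2 b2 [ha1 hb1] [ha2 hb2]; split; first exact: addr_ge0.
  apply: le_trans (@min_add _ _ _ ha1 ha2) _; exact: lerD.
- move=> i _; split => //.
Qed.

Section Main.
Variables (R : realType) (m n : nat) (f : 'I_n -> {set 'I_m} -> R) (w : 'I_n -> R) (eps : R).
Hypotheses (fnn : forall i, sf_nonneg (f i)) (fnorm : forall i, sf_normalized (f i))
  (fmono : forall i, sf_monotone (f i)) (fsub : forall i, sf_submodular (f i))
  (fT : forall i, 1 <= f i [set: 'I_m]) (w0 : forall i, 0 <= w i) (e0 : 0 < eps)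
  (emin : forall i S j, 0 < marginal (f i) S j -> eps <= marginal (f i) S j).

Lemma cover_spec i (p : {perm 'I_m}) :
  (cover_time (f i) p <= m)%N /\
  forall t, (t < cover_time (f i) p)%N = ~~ (1 <= f i (sf_prefix p t)).
Proof.
have Pm : (fun c => 1 <= f i (sf_prefix p c)) m by rewrite /= prefix_m.
have [hk Pk Pb] := @find_iota_spec (fun c => 1 <= f i (sf_prefix p c)) m Pm.
split => // t.
apply/idP/idP => [ht|].
  by apply: Pb.
apply: contraNT; rewrite -leqNgt => ht.
apply: le_trans Pk _; apply: fmono; exact: prefix_sub.
Qed.

Lemma cover_ge1 i (p : {perm 'I_m}) : (0 < cover_time (f i) p)%N.
Proof.
have [_ ->] := cover_spec i p.
by rewrite prefix_0 (fnorm i) ler10.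
Qed.

Lemma sum_ind c : (c <= m)%N -> (c%:R : R) = \sum_(t < m) ((t < c)%N%:R).
Proof.
move=> cm.
have := @big_ord_widen R 0 +%R c m (fun _ => (1:R)) cm.
rewrite sumr_const card_ord => ->.
by rewrite big_mkcond /=; apply: eq_bigr => t _; case: ifP.
Qed.

Lemma cost_eq (p : {perm 'I_m}) :
  cost f w p = \sum_(t < m) \sum_(i < n) w i * ((t < cover_time (f i) p)%N%:R).
Proof.
rewrite /cost exchange_big /=; apply: eq_bigr => i _.
have [cm _] := cover_spec i p.
by rewrite (@sum_ind _ cm) mulr_sumr.
Qed.

Lemma marg_ge0 i S j : 0 <= marginal (f i) S j.
Proof. rewrite /marginal subr_ge0; apply: fmono; exact: finset.subsetUl. Qed.

Lemma dimret i S A j : f i (S :|: A :|: [set j]) - f i (S :|: A) <= marginal (f i) S j.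
Proof.
have h := fsub i (S :|: [set j]) (S :|: A).
have e1 : S :|: [set j] :|: (S :|: A) = S :|: A :|: [set j].
  by rewrite finset.setUACA finset.setUid -finset.setUA [[set j] :|: A]finset.setUC.
have h2 : f i S <= f i ((S :|: [set j]) :&: (S :|: A)).
  by apply: fmono; rewrite finset.subsetI !finset.subsetUl.
rewrite e1 in h; rewrite /marginal; lra.
Qed.

Lemma sum_marg_seq i S (s : seq 'I_m) :
  f i (S :|: [set x in s]) - f i S <= \sum_(j <- s) marginal (f i) S j.
Proof.
elim: s => [|j s IH].
  rewrite big_nil.
  have -> : [set x in [::]] = (finset.set0 : {set 'I_m}) by apply/setP => x; rewrite !inE.
  by rewrite finset.setU0 subrr.
rewrite big_cons.
have -> : S :|: [set x in j :: s] = S :|: [set x in s] :|: [set j].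
  by apply/setP => x; rewrite !inE; case: (x \in S); case: (x == j); case: (x \in s).
have := dimret i S [set x in s] j; lra.
Qed.

Lemma sum_marg_set i S A :
  f i (S :|: A) - f i S <= \sum_(j in A) marginal (f i) S j.
Proof.
have := sum_marg_seq i S (enum A).
by rewrite set_enum big_enum.
Qed.

Lemma P_ge0 i S j : 0 <= aru_P (f i) S j.
Proof.
rewrite /aru_P; case: ifP => // h.
rewrite /Num.min; case: ifP => _ //.
apply: divr_ge0; first exact: marg_ge0.
rewrite subr_ge0; apply: ltW; rewrite real_ltNge ?h //; exact: num_real.
Qed.

Lemma P_le1 i S j : aru_P (f i) S j <= 1.
Proof. rewrite /aru_P; case: ifP => _; [exact: ler01 | exact: mnl]. Qed.

Lemma P_in i (S : {set 'I_m}) (j : 'I_m) : j \in S -> aru_P (f i) S j = 0.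
Proof.
move=> jS; rewrite /aru_P /marginal; case: ifP => // _.
have -> : S :|: [set j] = S by apply/finset.setUidPl; rewrite finset.sub1set.
by rewrite subrr mul0r mnE2.
Qed.

Lemma P_cov i S j : 1 <= f i S -> aru_P (f i) S j = 0.
Proof. by rewrite /aru_P => ->. Qed.


Variables (pi sigma : {perm 'I_m}).
Hypothesis Hpi : aru_output f w pi.

Definition c i := cover_time (f i) pi.
Definition cs i := cover_time (f i) sigma.
Definition Rt (t : nat) := \sum_(i < n) w i * (t < c i)%N%:R.
Definition Rs (k : nat) := \sum_(i < n) w i * (k < cs i)%N%:R.
Definition gt (t : 'I_m) := aru_score f w (sf_prefix pi t) (pi t).

Lemma Rt_ge0 t : 0 <= Rt t.
Proof. by apply: sumr_ge0 => i _; apply: mulr_ge0. Qed.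
Lemma Rs_ge0 k : 0 <= Rs k.
Proof. by apply: sumr_ge0 => i _; apply: mulr_ge0. Qed.

Lemma Rt_anti t t' : (t <= t')%N -> Rt t' <= Rt t.
Proof.
move=> tt'; apply: ler_sum => i _; apply: ler_wpM2l => //.
rewrite ler_nat; case: (ltnP t' (c i)) => h //.
by rewrite (leq_ltn_trans tt' h).
Qed.

Lemma Rt_le_Rs0 t : Rt t <= Rs 0.
Proof.
apply: ler_sum => i _; apply: ler_wpM2l => //.
by rewrite /cs cover_ge1 ler_nat leq_b1.
Qed.

Lemma Rs_m : Rs m = 0.
Proof.
apply: big1 => i _; have [cm _] := cover_spec i sigma.
by rewrite ltnNge cm mulr0.
Qed.

Definition kk t := find (fun k => 2 * Rs k <= Rt t) (iota 0 m.+1).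

Lemma kk_spec t : [/\ (kk t <= m)%N, 2 * Rs (kk t) <= Rt t &
  forall k, (k < kk t)%N -> Rt t < 2 * Rs k].
Proof.
have Pm : (fun k => 2 * Rs k <= Rt t) m by rewrite /= Rs_m mulr0 Rt_ge0.
have [h1 h2 h3] := @find_iota_spec (fun k => 2 * Rs k <= Rt t) m Pm.
split => // k /h3; by rewrite ltNge.
Qed.

Lemma kk_mono t t' : (t <= t')%N -> (kk t <= kk t')%N.
Proof.
move=> tt'; rewrite leqNgt; apply/negP => h.
have [_ _ h3] := kk_spec t; have [_ h2 _] := kk_spec t'.
have := h3 _ h; have := @Rt_anti _ _ tt'; lra.
Qed.

Lemma gt_ge0 (t : 'I_m) : 0 <= gt t.
Proof. by apply: sumr_ge0 => i _; apply: mulr_ge0 => //; apply: P_ge0. Qed.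

Lemma score_le (t : 'I_m) j : aru_score f w (sf_prefix pi t) j <= gt t.
Proof.
case: (boolP (j \in sf_prefix pi t)) => hj; last exact: Hpi.
have -> : aru_score f w (sf_prefix pi t) j = 0.
  by apply: big1 => i _; rewrite P_in // mulr0.
exact: gt_ge0.
Qed.

Lemma greedy (t : 'I_m) k : (k <= m)%N -> Rt t - Rs k <= k%:R * gt t.
Proof.
move=> km; set S := sf_prefix pi t.
have step : Rt t - Rs k <= \sum_(u < m | (u < k)%N) aru_score f w S (sigma u).
  rewrite /Rt /Rs -sumrB /aru_score exchange_big /=; apply: ler_sum => i _.
  rewrite -mulrBr -mulr_sumr; apply: ler_wpM2l => //.
  have sge0 : 0 <= \sum_(u < m | (u < k)%N) aru_P (f i) S (sigma u).
    by apply: sumr_ge0 => u _; apply: P_ge0.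
  case: (ltnP t (c i)) => htc; case: (ltnP k (cs i)) => hk /=; try lra.
  have [_ hc] := cover_spec i pi; rewrite /c hc in htc.
  have [_ hcs] := cover_spec i sigma; rewrite leqNgt /cs hcs negbK in hk.
  rewrite subr0.
  have E : \sum_(j in sf_prefix sigma k) aru_P (f i) S j =
           \sum_(u < m | (u < k)%N) aru_P (f i) S (sigma u).
    rewrite /sf_prefix big_imset; last by move=> x y _ _ /perm_inj.
    by apply: eq_bigl => u; rewrite inE.
  rewrite -E.
  have r0 : 0 < 1 - f i S by rewrite subr_gt0 ltNge.
  have hm := sum_marg_set i S (sf_prefix sigma k).
  have hU : f i (sf_prefix sigma k) <= f i (S :|: sf_prefix sigma k).
    by apply: fmono; exact: finset.subsetUr.
  have -> : \sum_(j in sf_prefix sigma k) aru_P (f i) S j =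
            \sum_(j in sf_prefix sigma k) Num.min 1 (marginal (f i) S j / (1 - f i S)).
    by apply: eq_bigr => j _; rewrite /aru_P (negbTE htc).
  have hx : forall j, 0 <= marginal (f i) S j / (1 - f i S).
    by move=> j; apply: divr_ge0; [exact: marg_ge0 | exact: ltW].
  apply: le_trans (@sum_min _ _ (mem (sf_prefix sigma k)) _ hx).
  rewrite -mulr_suml mnE1 // ler_pdivlMr // mul1r; lra.
apply: le_trans step _.
apply: le_trans (ler_sum _ (fun u _ => score_le t (sigma u))) _.
have := @big_ord_widen R 0 +%R k m (fun _ => gt t) km.
by rewrite sumr_const card_ord mulr_natl => <-.
Qed.

Lemma Rt_step (t : 'I_m) : Rt t <= 2 * (kk t)%:R * gt t.
Proof.
have [h1 h2 _] := kk_spec t.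
have := @greedy t _ h1; lra.
Qed.



Lemma cov_zero i (t : 'I_m) : (c i <= t)%N -> aru_P (f i) (sf_prefix pi t) (pi t) = 0.
Proof.
move=> h; apply: P_cov; have [_ hc] := cover_spec i pi.
by move: h; rewrite leqNgt /c hc negbK.
Qed.

Lemma prefix_Sn (p : {perm 'I_m}) (j0 : 'I_m) t : (t < m)%N ->
  sf_prefix p t.+1 = sf_prefix p t :|: [set p (insubd j0 t)].
Proof.
move=> ht; have := @prefix_S m p (insubd j0 t).
by rewrite insubdK.
Qed.

Lemma perfn i : \sum_(t < m) (kk t)%:R * aru_P (f i) (sf_prefix pi t) (pi t)
   <= (kk (c i).-1)%:R * (1 + psi eps 1).
Proof.
have c1 : (0 < c i)%N := cover_ge1 i pi.
have [cm hc] := cover_spec i pi.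
have m0 : (0 < m)%N by apply: leq_trans cm.
pose j0 : 'I_m := Ordinal m0.
set K := (kk (c i).-1)%:R.
apply: le_trans (_ : \sum_(t < m) K * aru_P (f i) (sf_prefix pi t) (pi t) <= _).
  apply: ler_sum => t _; case: (ltnP t (c i)) => h.
    apply: ler_wpM2r; first exact: P_ge0.
    rewrite ler_nat; apply: kk_mono; by rewrite -ltnS prednK.
  by rewrite cov_zero // !mulr0.
rewrite -mulr_sumr; apply: ler_wpM2l; first exact: ler0n.
pose a t := f i (sf_prefix pi t).
pose Pn t := aru_P (f i) (sf_prefix pi t) (pi (insubd j0 t)).
have -> : \sum_(t < m) aru_P (f i) (sf_prefix pi t) (pi t) = \sum_(t < c i) Pn t.
  rewrite (@big_ord_widen R 0 +%R (c i) m Pn cm) [RHS]big_mkcond /=.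
  apply: eq_bigr => t _; rewrite /Pn valKd; case: ifP => // h.
  by rewrite cov_zero // leqNgt h.
have Ha : forall t, (t < c i)%N -> a t < 1.
  by move=> t; rewrite /c hc -ltNge.
have Hm : forall t, (t.+1 < c i)%N -> a t.+1 - a t = marginal (f i) (sf_prefix pi t) (pi (insubd j0 t)).
  move=> t ht; rewrite /a /marginal (prefix_Sn pi j0) //.
  by apply: leq_trans cm; apply: ltnW.
have Hm' : forall t, (t < c i)%N -> a t.+1 - a t = marginal (f i) (sf_prefix pi t) (pi (insubd j0 t)).
  move=> t ht; rewrite /a /marginal (prefix_Sn pi j0) //.
  by apply: leq_trans cm.
have Hinc : forall t, (t.+1 < c i)%N -> a t <= a t.+1 /\ (a t.+1 - a t = 0 \/ eps <= a t.+1 - a t).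
  move=> t ht; have := Hm t ht; have := marg_ge0 i (sf_prefix pi t) (pi (insubd j0 t)).
  case: (ltrP 0 (a t.+1 - a t)) => hd.
    move=> _ e; split; first lra.
    by right; rewrite e; apply: emin; rewrite -e.
  move=> h0 e; split; first lra.
  by left; lra.
have HP : forall t, (t < c i)%N -> Pn t = Num.min 1 ((a t.+1 - a t) / (1 - a t)).
  move=> t ht; rewrite /Pn /aru_P Hm' //.
  by rewrite ifN // -ltNge; apply: Ha.
have := @seq_bound R a Pn eps (c i) e0 Ha Hinc HP (c i).-1 0.
rewrite add0n prednK // => /(_ erefl).
under eq_bigr do rewrite add0n.
by rewrite /a prefix_0 (fnorm i) subr0.
Qed.

Lemma opt_bound : \sum_(i < n) w i * (kk (c i).-1)%:R <= 2 * \sum_(k < m) Rs k.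
Proof.
have H : forall i, (kk (c i).-1 <= m)%N by move=> i; have [] := kk_spec (c i).-1.
under eq_bigr do rewrite (@sum_ind _ (H _)) mulr_sumr.
rewrite exchange_big mulr_sumr /=; apply: ler_sum => k _.
case: (boolP [exists i, (k < kk (c i).-1)%N]).
  move/existsP => [i0 hi0].
  have exP : exists t, (k < kk t)%N by exists (c i0).-1.
  case: (ex_minnP exP) => t0 Ht0 Hmin.
  have [_ _ h3] := kk_spec t0; have := h3 k Ht0.
  suff : \sum_(i < n) w i * (k < kk (c i).-1)%N%:R <= Rt t0 by lra.
  apply: ler_sum => i _; apply: ler_wpM2l => //; rewrite ler_nat.
  case: (boolP (k < kk (c i).-1)%N) => h //=.
  have := Hmin _ h; rewrite -ltnS prednK ?cover_ge1 // => ->.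
  by [].
move/existsPn => Hn.
rewrite big1 => [|i _]; first by rewrite mulr_ge0 ?Rs_ge0.
by rewrite (negbTE (Hn i)) mulr0.
Qed.

Lemma alg_bound : cost f w pi <= 4 * (1 + psi eps 1) * cost f w sigma.
Proof.
have -> : cost f w pi = \sum_(t < m) Rt t by exact: cost_eq.
have -> : cost f w sigma = \sum_(k < m) Rs k by exact: cost_eq.
apply: le_trans (ler_sum _ (fun t _ => Rt_step t)) _.
have -> : \sum_(t < m) 2 * (kk t)%:R * gt t =
  \sum_(i < n) w i * (2 * \sum_(t < m) (kk t)%:R * aru_P (f i) (sf_prefix pi t) (pi t)).
  rewrite /gt /aru_score.
  under eq_bigr do rewrite mulr_sumr.
  rewrite exchange_big /=; apply: eq_bigr => i _.
  rewrite mulr_sumr mulr_sumr; apply: eq_bigr => t _; ring.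
have L0 : 0 <= 1 + psi eps 1 by have := psi_ge0 _ eps 1; lra.
apply: le_trans (_ : \sum_(i < n) w i * (2 * ((kk (c i).-1)%:R * (1 + psi eps 1))) <= _).
  apply: ler_sum => i _; apply: ler_wpM2l => //; apply: ler_wpM2l => //; exact: perfn.
have -> : \sum_(i < n) w i * (2 * ((kk (c i).-1)%:R * (1 + psi eps 1))) =
   2 * (1 + psi eps 1) * \sum_(i < n) w i * (kk (c i).-1)%:R.
  rewrite mulr_sumr; apply: eq_bigr => i _; ring.
have := opt_bound.
have : 0 <= 2 * (1 + psi eps 1) by lra.
move=> h2 h3.
have := ler_wpM2l h2 h3.
lra.
Qed.

End Main.

Theorem theorem1 (R : realType) :
  exists C : R, 0 < C /\
  forall (m n : nat) (f : 'I_n -> {set 'I_m} -> R) (w : 'I_n -> R) (eps : R),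
    (forall i, sf_nonneg (f i)) ->
    (forall i, sf_normalized (f i)) ->
    (forall i, sf_monotone (f i)) ->
    (forall i, sf_submodular (f i)) ->
    (forall i, 1 <= f i (finset.setTfor 'I_m)) ->
    (forall i, 0 <= w i) ->
    (* eps = min { f^i_S(j) : f^i_S(j) > 0 } *)
    (exists i S j, 0 < marginal (f i) S j /\ marginal (f i) S j = eps) ->
    (forall i S j, 0 < marginal (f i) S j -> eps <= marginal (f i) S j) ->
    forall pi : {perm 'I_m}, aru_output f w pi ->
    forall sigma : {perm 'I_m},
      cost f w pi <= C * Num.max 1 (ln (eps^-1)) * cost f w sigma.
Proof.
exists 12; split; first by [].
move=> m n f w eps fnn fnorm fmono fsub fT w0 [i0 [S0 [j0 [hp he]]]] emin pi Hpi sigma.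
have e0 : 0 < eps by rewrite -he.
have H := @alg_bound R m n f w eps fnorm fmono fsub fT w0 e0 emin pi sigma Hpi.
apply: le_trans H _.
have cs0 : 0 <= cost f w sigma.
  by apply: sumr_ge0 => i _; apply: mulr_ge0 => //; exact: ler0n.
apply: ler_wpM2r => //.
have M1 := @mxl _ 1 (ln eps^-1).
have M2 := @mxr _ 1 (ln eps^-1).
rewrite /psi div1r.
case: (leP 0 (1 + ln eps^-1)) => h.
  lra.
lra.
Qed.
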